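(* Let $0<p<1$, $q=0$ and $0<\theta<1$. Let \[ m_{\mathrm{COMP}}=\min_{\alpha,d}\max\left\{\frac{\theta}{1-\theta}\frac{1}{d\,D_{\mathrm{KL}}(\alpha\|0)},\ \frac{1}{1-\theta}\frac{1}{d\,D_{\mathrm{KL}}(\alpha\|e^{-d}(1-p))}\right\}k\log(n/k), \] the minimum over $d>0$ and $\alpha\in(0,e^{-d}(1-p))$, and with $w=e^{-d}p+1-e^{-d}$, \[ m_{\mathrm{DD}}=\min_{\alpha,\beta,d}\max\{c_1(\alpha,d),c_2(\alpha,d),c_3(\beta,d),c_4(\alpha,\beta,d)\}\,k\log(n/k), \] the minimum over $d>0$, $\alpha\in(0,e^{-d}(1-p))$, $\beta\in(0,e^{-d})$, where $c_1(\alpha,d)=\frac{\theta}{1-\theta}\frac{1}{d\,D_{\mathrm{KL}}(\alpha\|0)}$, $c_2(\alpha,d)=\frac{1}{d\,D_{\mathrm{KL}}(\alpha\|1-w)}$, $c_3(\beta,d)=\frac{\theta}{1-\theta}\frac{1}{d\,D_{\mathrm{KL}}(\beta\|e^{-d})}$ and \[ c_4(\alpha,\beta,d)=\max_{1-\alpha\le z\le1}\left\{\frac{1}{1-\theta}\frac{1}{d\Big(D_{\mathrm{KL}}(z\|w)+\mathbf 1\big\{\beta>\tfrac{ze^{-d}p}{w}\big\}\,z\,D_{\mathrm{KL}}\big(\tfrac\beta z\,\big\|\,\tfrac{e^{-d}p}{w}\big)\Big)}\right\}. \] Then $m_{\mathrm{COMP}}\ge m_{\mathrm{DD}}$.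
   Context: $\log$ is the natural logarithm; $D_{\mathrm{KL}}(r\|s)=r\log(r/s)+(1-r)\log\frac{1-r}{1-s}$, extended by continuity (possibly to $+\infty$) at $r$ or $s\in\{0,1\}$; $1/\infty$ is read as $0$; $\mathbf 1\{\cdot\}$ is the indicator function; $n,k$ are positive integers with $k<n$. (These quantities are the test-number bounds for noisy COMP and noisy DD with constant-column design on the reverse Z channel, i.e. false-positive probability $p$ and false-negative probability $q=0$.) *)

(* Defs.v *)
From HB Require Import structures.
From mathcomp Require Import all_boot all_order all_algebra.
From mathcomp Require Import all_classical all_reals all_analysis.
Set Implicit Arguments. Unset Strict Implicit. Unset Printing Implicit Defensive.
Import Order.TTheory GRing.Theory Num.Theory.
Local Open Scope ring_scope.
Local Open Scope classical_set_scope.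

Section Defs.
Variable R : realType.

(* a * log(a/b), extended by continuity: 0 log(0/b) = 0, a log(a/0) = +oo (a>0) *)
Definition xlogxy (a b : R) : \bar R :=
  if a == 0 then 0%E
  else if b == 0 then +oo%E
  else (a * ln (a / b))%:E.

(* Binary KL divergence D_KL(r || s) with values in \bar R.
   Outside [0,1]^2 (where it is undefined) we use the convention +oo. *)
Definition DKL (r s : R) : \bar R :=
  if (0 <= r <= 1) && (0 <= s <= 1) then (xlogxy r s + xlogxy (1 - r) (1 - s))%E
  else +oo%E.

Definition erecip (x : \bar R) : \bar R :=
  match x with
  | r%:E => if r == 0 then +oo%E else (r^-1)%:E
  | +oo%E => 0%E
  | -oo%E => 0%E
  end.

Definition indic (b : bool) : R := if b then 1 else 0.

Definition comp_obj (p theta alpha d : R) : \bar R :=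
  maxe ((theta / (1 - theta))%:E * erecip (d%:E * DKL alpha 0))%E
       ((1 / (1 - theta))%:E * erecip (d%:E * DKL alpha (expR (- d) * (1 - p))))%E.

Definition m_COMP (n k : nat) (p theta : R) : \bar R :=
  (ereal_inf [set x | exists alpha d : R, (0 < d)%R /\ (0 < alpha)%R /\
      (alpha < expR (- d) * (1 - p))%R /\ x = comp_obj p theta alpha d]
   * (k%:R * ln (n%:R / k%:R))%:E)%E.

Definition wDD (p d : R) : R := expR (- d) * p + 1 - expR (- d).

Definition c1 (theta alpha d : R) : \bar R :=
  ((theta / (1 - theta))%:E * erecip (d%:E * DKL alpha 0))%E.
Definition c2 (p alpha d : R) : \bar R :=
  erecip (d%:E * DKL alpha (1 - wDD p d))%E.
Definition c3 (theta beta d : R) : \bar R :=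
  ((theta / (1 - theta))%:E * erecip (d%:E * DKL beta (expR (- d))))%E.
Definition c4 (p theta alpha beta d : R) : \bar R :=
  ereal_sup [set y | exists z : R, (1 - alpha <= z <= 1)%R /\
     y = ((1 / (1 - theta))%:E *
          erecip (d%:E * (DKL z (wDD p d) +
             (indic (beta > z * expR (- d) * p / wDD p d) * z)%:E *
             DKL (beta / z) (expR (- d) * p / wDD p d))))%E].

Definition dd_obj (p theta alpha beta d : R) : \bar R :=
  maxe (maxe (c1 theta alpha d) (c2 p alpha d))
       (maxe (c3 theta beta d) (c4 p theta alpha beta d)).

Definition m_DD (n k : nat) (p theta : R) : \bar R :=
  (ereal_inf [set x | exists alpha beta d : R, (0 < d)%R /\ (0 < alpha)%R /\
      (alpha < expR (- d) * (1 - p))%R /\ (0 < beta)%R /\ (beta < expR (- d))%R /\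
      x = dd_obj p theta alpha beta d]
   * (k%:R * ln (n%:R / k%:R))%:E)%E.

End Defs.

(* Main.v *)
Require Import Defs.
From HB Require Import structures.
From mathcomp Require Import all_boot all_order all_algebra.
From mathcomp Require Import all_classical all_reals all_analysis.
From mathcomp Require Import lra ring.
Import Order.TTheory GRing.Theory Num.Theory.
Local Open Scope ring_scope.
Set Implicit Arguments. Unset Strict Implicit.

Section H.
Variable R : realType.

Lemma ln_lesub1 (x : R) : 0 < x -> ln x <= x - 1.
Proof.
move=> x0; have := @le_ln1Dx R (x - 1).
rewrite addrCA subrr addr0; apply; lra.
Qed.

Lemma lnsub_ge (a b : R) : 0 < a -> 0 < b -> 1 - b / a <= ln a - ln b.
Proof.
move=> a0 b0; have := @ln_lesub1 (b / a) (divr_gt0 b0 a0).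
rewrite ln_div ?posrE //; lra.
Qed.

Lemma lndiv (a b : R) : 0 < a -> 0 < b -> ln (a / b) = ln a - ln b.
Proof. by move=> a0 b0; rewrite ln_div ?posrE. Qed.

Lemma xlogxyE (a b : R) : 0 < b -> xlogxy a b = (a * ln (a / b))%:E.
Proof.
move=> b0; rewrite /xlogxy; case: eqP => [->|_]; first by rewrite mul0r.
by rewrite gt_eqF.
Qed.

Lemma xlogxy_ge (a b : R) : 0 <= a -> 0 <= b -> ((a - b)%:E <= xlogxy a b)%E.
Proof.
move=> a0 b0; rewrite /xlogxy; case: eqP => [->|/eqP an0].
  by rewrite lee_fin; lra.
case: eqP => [_|/eqP bn0]; first by rewrite leey.
rewrite lee_fin.
have ap : 0 < a by rewrite lt_def an0 a0.
have bp : 0 < b by rewrite lt_def bn0 b0.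
rewrite lndiv //.
have := lnsub_ge ap bp.
move=> h; have := ler_wpM2l a0 h.
rewrite mulrBr mulr1 mulrCA divff // mulr1; lra.
Qed.

Lemma DKL_ge0 (r s : R) : (0 <= DKL r s)%E.
Proof.
rewrite /DKL; case: ifP => [/andP[/andP[r0 r1] /andP[s0 s1]]|_]; last by rewrite leey.
apply: le_trans (leeD (xlogxy_ge r0 s0) (xlogxy_ge _ _)); last 2 first.
- by rewrite subr_ge0.
- by rewrite subr_ge0.
by rewrite -EFinD lee_fin; lra.
Qed.

Lemma K3 (a b c : R) : 0 <= a -> 0 < b -> 0 < c ->
  a * ln (a / b) + a * (1 - c / b) <= a * ln (a / c).
Proof.
move=> a0 b0 c0; have [->|an0] := eqVneq a 0; first by rewrite !mul0r; lra.
have ap : 0 < a by rewrite lt_def an0 a0.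
rewrite !lndiv // -mulrDr; apply: ler_wpM2l => //.
have := lnsub_ge b0 c0; lra.
Qed.

Lemma K2 (a b c : R) : 0 <= a -> 0 < b -> 0 < c ->
  a * ln (b / c) + (a - b) <= a * ln (a / c).
Proof.
move=> a0 b0 c0; have [->|an0] := eqVneq a 0; first by rewrite !mul0r; lra.
have ap : 0 < a by rewrite lt_def an0 a0.
rewrite !lndiv //.
have := ler_wpM2l a0 (lnsub_ge ap b0).
rewrite mulrBr mulr1 mulrCA divff // mulr1 => h.
rewrite mulrBr mulrBr; lra.
Qed.

Lemma DKL_mono_s (al s1 s2 : R) : 0 < al -> al <= s1 -> s1 <= s2 -> s2 < 1 ->
  (DKL al s1 <= DKL al s2)%E.
Proof.
move=> a0 as1 s12 s21.
have s1p : 0 < s1 by lra.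
have s2p : 0 < s2 by lra.
rewrite /DKL.
have -> : (0 <= al <= 1) && (0 <= s1 <= 1) by apply/andP; split; apply/andP; split; lra.
have -> : (0 <= al <= 1) && (0 <= s2 <= 1) by apply/andP; split; apply/andP; split; lra.
have q1 : 0 < 1 - s1 by lra.
have q2 : 0 < 1 - s2 by lra.
rewrite (xlogxyE _ s1p) (xlogxyE _ s2p) (xlogxyE _ q1) (xlogxyE _ q2).
rewrite -!EFinD lee_fin.
have h1 := K3 (ltW a0) s1p s2p.
have h2 := K3 (a := 1 - al) (b := 1 - s1) (c := 1 - s2) ltac:(lra) ltac:(lra) ltac:(lra).
set u := s2 / s1 in h1 *; set v := (1 - s2) / (1 - s1) in h2 *.
have eu : s1 * u = s2 by rewrite /u mulrCA divff ?mulr1 //; lra.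
have ev : (1 - s1) * v = 1 - s2 by rewrite /v mulrCA divff ?mulr1 //; lra.
have u1 : 1 <= u by nra.
have v1 : v <= 1 by nra.
suff : 0 <= al * (1 - u) + (1 - al) * (1 - v) by lra.
have : 0 <= (s1 - al) * (u - v) by apply: mulr_ge0; lra.
nra.
Qed.

Lemma DKL_mono_z (w z1 z2 : R) : 0 < w < 1 -> w <= z1 -> z1 <= z2 -> z2 <= 1 -> z1 < 1 ->
  (DKL z1 w <= DKL z2 w)%E.
Proof.
move=> /andP[w0 w1] wz1 z12 z21 z11.
rewrite /DKL.
have -> : (0 <= z1 <= 1) && (0 <= w <= 1) by apply/andP; split; apply/andP; split; lra.
have -> : (0 <= z2 <= 1) && (0 <= w <= 1) by apply/andP; split; apply/andP; split; lra.
have q1 : 0 < 1 - w by lra.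
rewrite (xlogxyE _ w0) (xlogxyE _ w0) (xlogxyE _ q1) (xlogxyE _ q1).
rewrite -!EFinD lee_fin.
have h1 := K2 (a := z2) (b := z1) (c := w) ltac:(lra) ltac:(lra) w0.
have h2 := K2 (a := 1 - z2) (b := 1 - z1) (c := 1 - w) ltac:(lra) ltac:(lra) ltac:(lra).
have AB : ln ((1 - z1) / (1 - w)) <= ln (z1 / w).
  rewrite ler_ln ?posrE ?divr_gt0 //; try lra.
  rewrite ler_pdivrMr ?subr_gt0 // mulrAC ler_pdivlMr //; nra.
set A := ln (z1 / w) in h1 AB *; set B := ln ((1 - z1) / (1 - w)) in h2 AB *.
have : 0 <= (z2 - z1) * (A - B) by apply: mulr_ge0; lra.
nra.
Qed.


Lemma erecip_ge0 (x : \bar R) : (0 <= x)%E -> (0 <= erecip x)%E.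
Proof.
case: x => [r| |] //=; rewrite lee_fin => r0; case: eqP => _ //.
by rewrite lee_fin invr_ge0.
Qed.

Lemma erecip_anti (x y : \bar R) : (0 <= x)%E -> (x <= y)%E ->
  (erecip y <= erecip x)%E.
Proof.
case: x => [r| |] //=; last first.
- by move=> _; rewrite leye_eq => /eqP ->.
rewrite lee_fin => r0.
case: eqP => [_ _|/eqP rn0]; first by rewrite leey.
have rp : 0 < r by rewrite lt_def rn0 r0.
case: y => [t| |] //=; rewrite ?lee_fin => rt.
have tp : 0 < t by apply: lt_le_trans rt.
by rewrite gt_eqF // lee_fin lef_pV2 ?posrE.
by rewrite invr_ge0.
Qed.

Lemma DKL_sym (r s : R) : DKL r s = DKL (1 - r) (1 - s).
Proof.
rewrite /DKL !opprB !subrKC.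
have E : forall x : R, (0 <= 1 - x <= 1) = (0 <= x <= 1).
  by move=> x; apply/idP/idP => /andP[h1 h2]; apply/andP; split; lra.
by rewrite !E (addeC (xlogxy r s)).
Qed.

Lemma indic_ge0 (b : bool) : 0 <= @Defs.indic R b.
Proof. by case: b => /=; rewrite /Defs.indic. Qed.

Lemma DKL_0 (a : R) : 0 < a <= 1 -> DKL a 0 = +oo%E.
Proof.
move=> /andP[a0 a1]; rewrite /DKL.
have -> : (0 <= a <= 1) && (0 <= (0:R) <= 1) by apply/andP; split; apply/andP; split; lra.
rewrite /xlogxy gt_eqF // eqxx subr0 /=.
by rewrite oner_eq0; case: eqP.
Qed.

End H.

Unset Implicit Arguments. Set Strict Implicit.

Theorem corollary2p14 (R : realType) (n k : nat) (p theta : R) :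
  (0 < k)%N -> (k < n)%N ->
  0 < p < 1 -> 0 < theta < 1 ->
  (m_DD n k p theta <= m_COMP n k p theta)%E.
Proof.
move=> k0 kn /andP[p0 p1] /andP[t0 t1].
have C : (0 <= (k%:R * ln (n%:R / k%:R))%:E :> \bar R)%E.
  rewrite lee_fin; apply: mulr_ge0; first by rewrite ler0n.
  apply: ln_ge0; rewrite ler_pdivlMr ?ltr0n // mul1r ler_nat; exact: ltnW.
rewrite /m_DD /m_COMP; apply: lee_wpmul2r => //.
apply: le_ereal_inf_tmp => x [al [d [d0 [a0 [ae ->]]]]].
set e := expR (- d) in ae *.
have e0 : 0 < e by apply: expR_gt0.
have e1 : e < 1 by rewrite /e expR_lt1; lra.
have ale : al < e by nra.
apply: (@le_trans _ _ (dd_obj p theta al al d)).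
  by apply: ereal_inf_lbound; exists al, al, d; split => //; do 4 (split => //).
set s := e * (1 - p).
have s0 : 0 < s by rewrite /s; nra.
have s1 : s < 1 by rewrite /s; nra.
have Ds : (0 <= d%:E * DKL al s)%E by apply: mule_ge0; [rewrite lee_fin ltW|exact: DKL_ge0].
have t1' : 0 < 1 - theta by lra.
have T0 : (0 <= (1 / (1 - theta))%:E * erecip (d%:E * DKL al s))%E.
  by apply: mule_ge0; [rewrite lee_fin divr_ge0 // ltW|exact: erecip_ge0].
rewrite /comp_obj le_max; apply/orP; right.
rewrite /dd_obj !ge_max; apply/andP; split; apply/andP; split.
- rewrite /c1 DKL_0; last by apply/andP; split; lra.
  by rewrite gt0_muley ?lte_fin //= mule0.
- rewrite /c2.
  have -> : 1 - wDD p d = s by rewrite /s /e /wDD; ring.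
  apply: lee_pemull; first exact: erecip_ge0.
  by rewrite lee_fin ler_pdivlMr // mul1r; lra.
- rewrite /c3; apply: lee_pmul.
  + by rewrite lee_fin divr_ge0 // ltW.
  + apply: erecip_ge0; apply: mule_ge0; [rewrite lee_fin ltW //|exact: DKL_ge0].
  + by rewrite lee_fin ler_pM2r ?invr_gt0 //; lra.
  + apply: erecip_anti Ds _; apply: lee_wpmul2l; first by rewrite lee_fin ltW.
    apply: DKL_mono_s => //; first exact: ltW.
    rewrite -/e /s; nra.
- rewrite /c4; apply: ge_ereal_sup => y [z [/andP[z1 z2] ->]].
  apply: lee_wpmul2l; first by rewrite lee_fin divr_ge0 // ltW.
  apply: erecip_anti Ds _; apply: lee_wpmul2l; first by rewrite lee_fin ltW.
  apply: le_trans (leeDl _ _); last first.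
    apply: mule_ge0; last exact: DKL_ge0.
    rewrite lee_fin; apply: mulr_ge0; last lra.
    exact: indic_ge0.
  rewrite DKL_sym.
  have -> : 1 - s = wDD p d by rewrite /s /e /wDD; ring.
  apply: DKL_mono_z; try lra.
  + rewrite /wDD -/e; apply/andP; split; nra.
  + rewrite /wDD -/e; nra.
Qed.
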